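(* Let $G$ be a scheduling game on $m$ related machines (speeds $s_1,\dots,s_m>0$, arbitrary machine-dependent priority lists $\pi_1,\dots,\pi_m$) in which all jobs have the same processing-time function $p$, where either $p(t)=b+a t$ for all jobs ($b,a\ge 0$) or $p(t)=\max\{\tau,b-a t\}$ for all jobs ($b,a\ge0$, $\tau>0$). Run the following algorithm: set $\ell_j=0$ for all machines $j$; repeat, until all jobs are assigned: choose $j^\star\in\arg\min_j\big(\ell_j+p(\ell_j)/s_j\big)$, assign to machine $j^\star$ the unassigned job with highest priority in $\pi_{j^\star}$ (smallest $\pi_{j^\star}$-value), and set $\ell_{j^\star}\leftarrow \ell_{j^\star}+p(\ell_{j^\star})/s_{j^\star}$. Then the resulting profile is a pure Nash equilibrium of $G$.
   Context: Scheduling game: a finite set $N$ of $n\ge1$ jobs (players) and a set $M$ of $m\ge1$ machines. Machine $j$ has speed $s_j>0$ and a priority list $\pi_j$, a bijection $N\to\{1,\dots,n\}$; job $u$ has higher priority than $v$ on $j$ iff $\pi_j(u)<\pi_j(v)$. Each job $i$ has a processing-time function $p_i$: with positive deterioration $p_i(t)=b_i+a_it$ ($b_i,a_i\ge0$), with negative deterioration $p_i(t)=\max\{\tau_i,b_i-a_it\}$ ($b_i,a_i\ge0$, $\tau_i>0$). A profile $\sigma\in M^N$ assigns each job to a machine. On machine $j$, the jobs assigned to it, listed in increasing $\pi_j$-order as $i_1,i_2,\dots$, are processed without idle time: $S_{i_1}(\sigma)=0$, $C_{i_k}(\sigma)=S_{i_k}(\sigma)+p_{i_k}(S_{i_k}(\sigma))/s_j$,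 $S_{i_{k+1}}(\sigma)=C_{i_k}(\sigma)$. The cost of job $i$ is its completion time $C_i(\sigma)$. A pure Nash equilibrium (NE) is a profile in which no job can strictly decrease its completion time by unilaterally changing its machine. *)

(* Defs.v *)
From HB Require Import structures.
From mathcomp Require Import all_boot all_order all_algebra all_fingroup.
Set Implicit Arguments. Unset Strict Implicit. Unset Printing Implicit Defensive.
Import Order.TTheory GRing.Theory Num.Theory.
Local Open Scope ring_scope.

(* Machine j has speed s j and priority
   list pi j : {perm 'I_n}; job u has higher priority than v on j iff
   pi j u < pi j v (values in {0,..,n-1} instead of {1,..,n}). *)

Section Game.
Variables (R : realFieldType) (n m : nat).
Variables (p : 'I_n -> R -> R) (s : 'I_m -> R) (pi : 'I_m -> {perm 'I_n}).

Definition jobs_on (sigma : 'I_n -> 'I_m) (j : 'I_m) : seq 'I_n :=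
  sort (fun u v => (pi j u <= pi j v)%N) [seq k <- enum 'I_n | sigma k == j].

Definition process (j : 'I_m) (js : seq 'I_n) : R :=
  foldl (fun t k => t + p k t / s j) 0 js.

Definition completion (sigma : 'I_n -> 'I_m) (i : 'I_n) : R :=
  let j := sigma i in
  process j [seq k <- jobs_on sigma j | (pi j k <= pi j i)%N].

Definition deviate (sigma : 'I_n -> 'I_m) (i : 'I_n) (j : 'I_m) : 'I_n -> 'I_m :=
  fun k => if k == i then j else sigma k.

Definition is_NE (sigma : 'I_n -> 'I_m) : Prop :=
  forall (i : 'I_n) (j : 'I_m), completion sigma i <= completion (deviate sigma i j) i.

End Game.

(* Ties in the
   argmin are broken arbitrarily, so the algorithm is modelled as a
   (nondeterministic) reachability relation. *)
Section Algo.
Variables (R : realFieldType) (n m : nat).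
Variables (q : R -> R) (s : 'I_m -> R) (pi : 'I_m -> {perm 'I_n}).

Definition next_load (l : 'I_m -> R) (j : 'I_m) : R := l j + q (l j) / s j.

Inductive alg_reach : ('I_m -> R) -> ('I_n -> option 'I_m) -> Prop :=
| alg_start : alg_reach (fun _ => 0) (fun _ => None)
| alg_step (l : 'I_m -> R) (A : 'I_n -> option 'I_m) (jstar : 'I_m) (u : 'I_n) :
    alg_reach l A ->
    (forall j, next_load l jstar <= next_load l j) ->
    A u = None ->
    (forall v, A v = None -> (pi jstar u <= pi jstar v)%N) ->
    alg_reach (fun j => if j == jstar then next_load l jstar else l j)
              (fun k => if k == u then Some jstar else A k).

End Algo.

(* Main.v *)
Require Import Defs.
From HB Require Import structures.
From mathcomp Require Import all_boot all_order all_algebra all_fingroup.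
Import Order.TTheory GRing.Theory Num.Theory.
Local Open Scope ring_scope.
Set Implicit Arguments.

Lemma cnt_enum (T : finType) (P : pred T) : count P (enum T) = #|[pred x | P x]|.
Proof. by rewrite cardE -size_filter /enum_mem filter_predT. Qed.

Lemma foldl_iter (A B : Type) (g : A -> A) (x : A) (js : seq B) :
  foldl (fun t _ => g t) x js = iter (size js) g x.
Proof. by elim: js x => [|a js IH] x //=; rewrite IH -iterSr. Qed.

Section S.
Variables (R : realFieldType) (n m : nat) (q : R -> R) (s : 'I_m -> R)
  (pi : 'I_m -> {perm 'I_n}).
Hypothesis spos : forall j, 0 < s j.
Hypothesis qpos : forall t, 0 <= t -> 0 <= q t.

Definition f j t := t + q t / s j.
Definition F j r := iter r (f j) 0.

Lemma F_ge0 j r : 0 <= F j r.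
Proof.
elim: r => [|r IH] /=; first by [].
rewrite /f addr_ge0 // divr_ge0 ?qpos // ltW //.
Qed.

Lemma F_step j r : F j r <= F j r.+1.
Proof.
rewrite /= /f lerDl divr_ge0 ?qpos ?F_ge0 // ltW //.
Qed.

Lemma F_mono j r r' : (r <= r')%N -> F j r <= F j r'.
Proof.
elim: r' r => [|r' IH] r Hr.
  by move: Hr; rewrite leqn0 => /eqP->.
move: Hr; rewrite leq_eqVlt => /orP [/eqP->//|Hr].
exact: le_trans (IH r Hr) (F_step j r').
Qed.

Definition D (A : 'I_n -> option 'I_m) j i :=
  #|[pred k | (k != i) && (A k == Some j) && (pi j k <= pi j i)%N]|.

Definition Inv (l : 'I_m -> R) (A : 'I_n -> option 'I_m) :=
 [/\ forall j, l j = F j #|[pred k | A k == Some j]|,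
     forall i j v, A i = Some j -> A v = None -> (pi j i <= pi j v)%N &
     forall i j j', A i = Some j -> F j (D A j i).+1 <= F j' (D A j' i).+1].

Lemma inv_reach l A : alg_reach q s pi l A -> Inv l A.
Proof.
elim=> {l A} [|l A jstar u _ [Ia Ib Ic] Hmin Hu Hpri].
  split=> //.
  by move=> j; rewrite eq_card0.
set A' := fun k => if k == u then Some jstar else A k.
have A'E k : k != u -> A' k = A k by rewrite /A' => /negbTE ->.
split.
- move=> j.
  have -> : #|[pred k | A' k == Some j]| = ((jstar == j) + #|[pred k | A k == Some j]|)%N.
    rewrite (cardD1 u) [#|[pred k | A k == Some j]|](cardD1 u) !inE /A' eqxx Hu /=.
    congr (_ + _)%N; apply: eq_card => k; rewrite !inE.
    by case: (k =P u).
  case: (jstar =P j) => [<-|/eqP ne]; first by rewrite eqxx /next_load Ia.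
  by rewrite eq_sym (negbTE ne) Ia.
- move=> i j v; rewrite /A'.
  have [->|vu] := eqVneq v u; first by case: (_ == u).
  move=> + Hv.
  have [->|iu] := eqVneq i u; first by move=> -[<-]; apply: Hpri.
  move=> Hi.
  exact: Ib Hi Hv.
- move=> i j j'; rewrite {1}/A'; case: (i =P u) => [->[<-]|/eqP iu Hi].
    apply: (@le_trans _ _ (F jstar (#|[pred k | A k == Some jstar]|).+1)).
      apply: F_mono; rewrite ltnS; apply: subset_leq_card; apply/subsetP => k.
      rewrite !inE => /andP[/andP[ku]]; by rewrite A'E.
    apply: (@le_trans _ _ (F j' (#|[pred k | A k == Some j']|).+1)); last first.
      apply: F_mono; rewrite ltnS; apply: subset_leq_card; apply/subsetP => k.
      rewrite !inE => /eqP Hk.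
      have ku : k != u by apply/eqP => ku; rewrite ku Hu in Hk.
      by rewrite ku A'E // Hk eqxx /= (Ib _ _ _ Hk Hu).
    by rewrite /= -!Ia; apply: Hmin.
  apply: (@le_trans _ _ (F j (D A j i).+1)); last first.
    apply: (le_trans (Ic i j j' Hi)).
    apply: F_mono; rewrite ltnS; apply: subset_leq_card; apply/subsetP => k.
    rewrite !inE => /andP[/andP[ki /eqP Hk] ->].
    have ku : k != u by apply/eqP => ku; rewrite ku Hu in Hk.
    by rewrite ki A'E // Hk eqxx.
  apply: F_mono; rewrite ltnS; apply: subset_leq_card; apply/subsetP => k.
  rewrite !inE => /andP[/andP[ki]]; case: (k =P u) => [->|/eqP ku].
    rewrite /A' eqxx => /eqP [ej]; subst j => Hle.
    have Hge := Ib _ _ _ Hi Hu.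
    have : pi jstar u = pi jstar i by apply/val_inj/eqP; rewrite /= eqn_leq Hle Hge.
    by move/perm_inj => ue; move: iu; rewrite ue eqxx.
  by rewrite A'E // ki => -> ->.
Qed.

End S.
Arguments F {R m}.

Lemma completionE (R : realFieldType) (n m : nat) (q : R -> R)
  (s : 'I_m -> R) (pi : 'I_m -> {perm 'I_n}) sg i :
  completion (fun _ : 'I_n => q) s pi sg i =
  F q s (sg i) #|[pred k | (sg k == sg i) && (pi (sg i) k <= pi (sg i) i)%N]|.
Proof.
rewrite /completion /process foldl_iter size_filter /jobs_on.
rewrite (seq.permP (introT seq.permPl (path.perm_sort _ _))) count_filter cnt_enum.
congr (F _ _ _ _); apply: eq_card => k; rewrite !inE andbC //.
Qed.

Theorem theorem1 (R : realFieldType) (n m : nat) (q : R -> R)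
  (s : 'I_m -> R) (pi : 'I_m -> {perm 'I_n}) :
  (0 < n)%N -> (0 < m)%N ->
  (forall j, 0 < s j) ->
  ((exists b a : R, [/\ 0 <= b, 0 <= a & forall t, q t = b + a * t]) \/
   (exists b a tau : R, [/\ 0 <= b, 0 <= a, 0 < tau &
                          forall t, q t = Num.max tau (b - a * t)])) ->
  forall (l : 'I_m -> R) (A : 'I_n -> option 'I_m) (sigma : 'I_n -> 'I_m),
    alg_reach q s pi l A ->
    (forall i, A i = Some (sigma i)) ->
    is_NE (fun _ : 'I_n => q) s pi sigma.
Proof.
move=> _ _ spos hq l A sigma Hr HA.
have qpos : forall t, 0 <= t -> 0 <= q t.
  move=> t t0; case: hq => [[b [a [b0 a0 ->]]]|[b [a [tau [_ _ t0' ->]]]]].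
    by rewrite addr_ge0 // mulr_ge0.
  by rewrite le_max ltW.
have [_ _ Ic] := inv_reach spos qpos Hr.
move=> i j.
have key : forall sg j0, sg i = j0 -> (forall k, k != i -> sg k = sigma k) ->
   #|[pred k | (sg k == sg i) && (pi (sg i) k <= pi (sg i) i)%N]| = (D pi A j0 i).+1.
  move=> sg j0 Hi Hk; rewrite (cardD1 i) !inE eqxx leqnn /= add1n; congr S.
  apply: eq_card => k; rewrite !inE Hi.
  case: (k =P i) => [//|/eqP ki] /=; by rewrite Hk // HA.
rewrite !completionE (key sigma (sigma i)) // (key (deviate sigma i j) j).
- by rewrite /deviate eqxx; exact: Ic (HA i).
- by rewrite /deviate eqxx.
- by move=> k ki; rewrite /deviate (negbTE ki).
Qed.
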